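(* Consider the model $Y=g(X)+\varepsilon$ with $E[\varepsilon\mid Z]=0$ a.s. and $g\in L_2(X)$, where $X=(1,X_2)'$ and $X_2\in\{0,1\}$ is a binary (possibly endogenous) variable. Assume $E[Y^2]<\infty$, $0<\bar\pi<1$ and $\mathrm{var}(\pi(Z))>0$. Then there exists $h\in L_2(Z)^2$ with $E[h(Z)\mid X]=X$ a.s. Moreover, the minimum-norm solution $h_0$ of this equation has second component (the one corresponding to $X_2$) $$h_0(z)=\alpha+\gamma\pi(z),\qquad \gamma=\frac{\bar\pi(1-\bar\pi)}{\mathrm{var}(\pi(Z))},\quad \alpha=\bar\pi(1-\gamma).$$ Furthermore, the OLIVA $\beta=E[XX']^{-1}E[Xg(X)]$ equals $\beta=(c^{IV}_\pi,\alpha^{IV}_\pi)'$, where $$\alpha^{IV}_\pi=\frac{\mathrm{Cov}(Y,\pi(Z))}{\mathrm{Cov}(X_2,\pi(Z))},\qquad c^{IV}_\pi=E[Y]-\alpha^{IV}_\pi\bar\pi .$$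
   Context: $\pi(z)=\Pr(X_2=1\mid Z=z)$ is the propensity score, and $\bar\pi=\Pr(X_2=1)$. $L_2(V)$ denotes the square-integrable measurable functions of $V$. The minimum-norm solution is the solution of minimal $L_2(Z)$-norm, taken componentwise. *)

(* Defs.v *)
From HB Require Import structures.
From mathcomp Require Import all_boot all_order all_algebra.
From mathcomp Require Import all_classical all_reals all_analysis.
Set Implicit Arguments. Unset Strict Implicit. Unset Printing Implicit Defensive.
Import Order.TTheory GRing.Theory Num.Theory.
Local Open Scope classical_set_scope.
Local Open Scope ring_scope.

Section iv_defs.
Context {d : measure_display} {T : measurableType d} {R : realType}
  (P : probability T R).

(* [is_condexp P U V f]:  f(V) is a version of E[U | V], i.e.
   U is integrable, f is measurable, f(V) is integrable, and
   E[U 1_{V in A}] = E[f(V) 1_{V in A}] for every measurable A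
   (Kolmogorov's definition of conditional expectation given sigma(V)). *)
Definition is_condexp {dV} {TV : measurableType dV} (U : T -> R) (V : T -> TV)
    (f : TV -> R) : Prop :=
  [/\ P.-integrable setT (EFin \o U),
      measurable_fun setT f,
      P.-integrable setT (EFin \o (f \o V)) &
      forall A : set TV, measurable A ->
        ('E_P[U \* \1_(V @^-1` A)] = 'E_P[(f \o V) \* \1_(V @^-1` A)])%E].

Definition L2_of {dZ} {TZ : measurableType dZ} (Z : T -> TZ) (h : TZ -> R) : Prop :=
  measurable_fun setT h /\ (h \o Z) \in Lfun P 2.

Definition L2_sqnorm {dZ} {TZ : measurableType dZ} (Z : T -> TZ) (h : TZ -> R) : \bar R :=
  'E_P[fun t => (h (Z t)) ^+ 2].

(* h = (h1, h2) in L_2(Z)^2 solves E[h(Z) | X] = X a.s. (componentwise),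
   where X : T -> R * R is the regressor vector. *)
Definition iv_solution {dZ} {TZ : measurableType dZ} (Z : T -> TZ)
    (X : T -> R * R) (h : TZ -> R * R) : Prop :=
  [/\ L2_of Z (fun z => (h z).1), L2_of Z (fun z => (h z).2),
      is_condexp (fun t => (h (Z t)).1) X (fun x => x.1) &
      is_condexp (fun t => (h (Z t)).2) X (fun x => x.2)].

Definition min_norm_iv_solution {dZ} {TZ : measurableType dZ} (Z : T -> TZ)
    (X : T -> R * R) (h0 : TZ -> R * R) : Prop :=
  iv_solution Z X h0 /\
  forall h, iv_solution Z X h ->
    (L2_sqnorm Z (fun z => (h0 z).1) <= L2_sqnorm Z (fun z => (h z).1))%E /\
    (L2_sqnorm Z (fun z => (h0 z).2) <= L2_sqnorm Z (fun z => (h z).2))%E.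

Definition Xcomp (X : T -> R * R) (i : 'I_2) : T -> R :=
  fun t => if i == ord0 then (X t).1 else (X t).2.

Definition oliva (X : T -> R * R) (g : R * R -> R) : 'cV[R]_2 :=
  invmx (\matrix_(i < 2, j < 2) fine 'E_P[Xcomp X i \* Xcomp X j])
  *m (\col_(i < 2) fine 'E_P[Xcomp X i \* (g \o X)]).

End iv_defs.

(* Main.v *)
Require Import Defs.
From HB Require Import structures.
From mathcomp Require Import all_boot all_order all_algebra.
From mathcomp Require Import all_classical all_reals all_analysis.
From mathcomp Require Import ring lra measurable_realfun.
Import Order.TTheory GRing.Theory Num.Theory.
Local Open Scope classical_set_scope.
Local Open Scope ring_scope.

Section helpers.
Context {d : measure_display} {T : measurableType d} {R : realType}
  (P : probability T R).

Lemma sqrnK (x : R) : `|x| ^+ 2 = x ^+ 2.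
Proof. exact: real_normK (num_real x). Qed.

Lemma L1_dom (F G : T -> R) : F \in Lfun P 1 -> measurable_fun setT G ->
  (forall t, `|G t| <= F t) -> G \in Lfun P 1.
Proof.
move=> /Lfun1_integrable iF mG hG; apply/Lfun1_integrable.
apply: le_integrable iF => //; first exact/measurable_EFinP.
move=> t _ /=; rewrite lee_fin (le_trans (hG t))// ler_norm//.
Qed.

Lemma L1_bdd (G : T -> R) (B : R) : measurable_fun setT G ->
  (forall t, `|G t| <= B) -> G \in Lfun P 1.
Proof.
move=> mG hG; apply: (@L1_dom (cst B)) => //.
exact: Lfun_cst.
Qed.

Lemma L1_mfun (G : T -> R) : G \in Lfun P 1 -> measurable_fun setT G.
Proof. by case/andP; rewrite inE. Qed.

Lemma L2_mfun (G : T -> R) : G \in Lfun P 2%:E -> measurable_fun setT G.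
Proof. by case/andP; rewrite inE. Qed.

Lemma L2_L1 (G : T -> R) : G \in Lfun P 2%:E -> G \in Lfun P 1.
Proof. by move=> h; apply: Lfun_subset12 => //; exact: fin_num_measure. Qed.

Lemma L1_mulB (F G : T -> R) (B : R) : F \in Lfun P 1 -> measurable_fun setT G ->
  (forall t, `|G t| <= B) -> F \* G \in Lfun P 1.
Proof.
move=> hF mG hG.
apply: (@L1_dom (`|B| \o* (Num.norm \o F))).
- by apply: Lfun_scale => //; exact: Lfun_norm.
- by apply: measurable_funM => //; exact: L1_mfun hF.
- move=> t /=; rewrite normrM ler_wpM2l//.
  exact: le_trans (hG t) (ler_norm _).
Qed.

Lemma L2_bdd (G : T -> R) (B : R) : measurable_fun setT G ->
  (forall t, `|G t| <= B) -> G \in Lfun P 2%:E.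
Proof.
move=> mG hG.
rewrite inE; apply/andP; split; rewrite inE//=.
rewrite /finite_norm unlock poweR_lty//.
rewrite (_ : (fun x => `|(EFin \o G) x| `^ 2)%E = (fun x => (G x ^+ 2)%:E)); last first.
  by apply/funext => x /=; rewrite powR_mulrn// sqrnK.
apply: (@le_lt_trans _ _ (\int[P]_x (cst (B ^+ 2)%:E x))%E).
  apply: ge0_le_integral => //.
  - move=> t _ /=; rewrite lee_fin sqr_ge0//.
  - by apply/measurable_EFinP; exact: measurable_funX.
  - move=> t _ /=; rewrite lee_fin -sqrnK.
    have h := hG t; have h0 := normr_ge0 (G t); nra.
by rewrite integral_cst//= probability_setT mule1 ltry.
Qed.

Definition Ex (F : T -> R) : R := fine ('E_P[F])%E.

Lemma ExE (F : T -> R) : F \in Lfun P 1 -> ('E_P[F] = (Ex F)%:E)%E.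
Proof. by move=> h; rewrite /Ex fineK// expectation_fin_num. Qed.

Lemma eq_Ex (F G : T -> R) : (forall t, F t = G t) -> Ex F = Ex G.
Proof. by move=> h; congr Ex; apply/funext. Qed.

Lemma ExL (F G : T -> R) (a b : R) : F \in Lfun P 1 -> G \in Lfun P 1 ->
  Ex (fun t => a * F t + b * G t) = a * Ex F + b * Ex G.
Proof.
move=> hF hG.
rewrite /Ex (_ : (fun t => a * F t + b * G t) = (a \o* F) \+ (b \o* G)); last by apply/funext => t /=; rewrite mulrC [b * _]mulrC.
by rewrite expectationD ?Lfun_scale// !expectationZl// !ExE// -!EFinM -EFinD.
Qed.

Lemma ExZ (F : T -> R) (a : R) : F \in Lfun P 1 ->
  Ex (fun t => a * F t) = a * Ex F.
Proof.
move=> hF; rewrite (@eq_Ex _ (fun t => a * F t + 0 * F t)); last by move=> t; rewrite mul0r addr0.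
by rewrite ExL// mul0r addr0.
Qed.

Lemma Ex_cst (c : R) : Ex (fun=> c) = c.
Proof. by rewrite /Ex (_ : (fun=> c) = cst c)// expectation_cst. Qed.

Lemma L1_lin (F G : T -> R) (a b : R) : F \in Lfun P 1 -> G \in Lfun P 1 ->
  (fun t => a * F t + b * G t) \in Lfun P 1.
Proof.
move=> hF hG.
rewrite (_ : (fun t => a * F t + b * G t) = (a \o* F) \+ (b \o* G)); last by apply/funext => t /=; rewrite mulrC [b * _]mulrC.
by apply: rpredD; apply: Lfun_scale.
Qed.

Lemma expect_ae (F G : T -> R) : measurable_fun setT F -> measurable_fun setT G ->
  {ae P, forall t, F t = G t} -> ('E_P[F] = 'E_P[G])%E.
Proof.
move=> mF mG h; rewrite unlock; apply: ae_eq_integral => //.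
- exact/measurable_EFinP.
- exact/measurable_EFinP.
- by apply: filterS h => t /= ->.
Qed.

Lemma Ex_ge0 (F : T -> R) : (forall t, 0 <= F t) -> 0 <= Ex F.
Proof. by move=> h; apply: fine_ge0; apply: expectation_ge0. Qed.

Lemma ae0 (G : T -> R) : measurable_fun setT G -> (forall t, 0 <= G t) ->
  Ex G = 0 -> G \in Lfun P 1 -> {ae P, forall t, G t = 0}.
Proof.
move=> mG G0 EG LG.
have : ('E_P[G] = 0)%E by rewrite ExE// EG.
rewrite unlock => h.
have : (\int[P]_x `|(EFin \o G) x| = 0)%E.
  by rewrite -h; apply: eq_integral => t _ /=; rewrite ger0_norm.
have mG' : measurable_fun setT (EFin \o G) by apply/measurable_EFinP.
move/(ae_eq_integral_abs P measurableT mG').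
by apply: filterS => t /(_ I) [].
Qed.

Lemma cov_ae (F1 F2 G1 G2 : T -> R) :
  measurable_fun setT F1 -> measurable_fun setT F2 ->
  measurable_fun setT G1 -> measurable_fun setT G2 ->
  {ae P, forall t, F1 t = G1 t} -> {ae P, forall t, F2 t = G2 t} ->
  covariance P F1 F2 = covariance P G1 G2.
Proof.
move=> m1 m2 n1 n2 e1 e2.
rewrite unlock (@expect_ae F1 G1 m1 n1 e1) (@expect_ae F2 G2 m2 n2 e2).
apply: expect_ae.
- by apply: measurable_funM; apply: measurable_funB.
- by apply: measurable_funM; apply: measurable_funB.
- by apply: filterS2 e1 e2 => t h1 h2; rewrite !mulrfctE /= h1 h2.
Qed.

Lemma ExL3 (F G H : T -> R) (a b c : R) :
  F \in Lfun P 1 -> G \in Lfun P 1 -> H \in Lfun P 1 ->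
  Ex (fun t => a * F t + b * G t + c * H t) = a * Ex F + b * Ex G + c * Ex H.
Proof.
move=> hF hG hH.
rewrite (@eq_Ex _ (fun t => 1 * (a * F t + b * G t) + c * H t)); last by move=> t; rewrite mul1r.
by rewrite ExL ?L1_lin// ExL// mul1r.
Qed.

Lemma L1_lin3 (F G H : T -> R) (a b c : R) :
  F \in Lfun P 1 -> G \in Lfun P 1 -> H \in Lfun P 1 ->
  (fun t => a * F t + b * G t + c * H t) \in Lfun P 1.
Proof.
move=> hF hG hH.
rewrite (_ : (fun t => _) = (fun t => 1 * (a * F t + b * G t) + c * H t)).
  by apply: L1_lin => //; exact: L1_lin.
by apply/funext => t; rewrite mul1r.
Qed.

Lemma L1_cst (c : R) : (fun=> c) \in Lfun P 1.
Proof. exact: (@Lfun_cst _ _ _ P c 1). Qed.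

End helpers.

Arguments L1_dom {d T R P F G}.
Arguments L1_bdd {d T R P G B}.
Arguments L1_mfun {d T R P G}.
Arguments L2_mfun {d T R P G}.
Arguments L2_L1 {d T R P G}.
Arguments L1_mulB {d T R P F G B}.
Arguments L2_bdd {d T R P G B}.
Arguments ExE {d T R P F}.
Arguments eq_Ex {d T R P F G}.
Arguments ExL {d T R P F G a b}.
Arguments ExZ {d T R P F a}.
Arguments L1_lin {d T R P F G a b}.
Arguments expect_ae {d T R P F G}.
Arguments Ex_ge0 {d T R P F}.
Arguments ae0 {d T R P G}.
Arguments cov_ae {d T R P F1 F2 G1 G2}.
Arguments ExL3 {d T R P F G H a b c}.
Arguments L1_lin3 {d T R P F G H a b c}.

Module CoreM.
Import HBSimple HBNNSimple numFieldNormedType.Exports.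
Section core.
Context {d : measure_display} {T : measurableType d} {R : realType}
  (P : probability T R).

Lemma Ex_sum n (G : 'I_n -> T -> R) : (forall i, G i \in Lfun P 1) ->
  (fun t => \sum_(i < n) G i t) \in Lfun P 1 /\
  Ex P (fun t => \sum_(i < n) G i t) = \sum_(i < n) Ex P (G i).
Proof.
elim: n G => [|n IH] G hG.
  rewrite (_ : (fun t => \sum_(i < 0) G i t) = cst 0); last first.
    by apply/funext => t; rewrite big_ord0.
  by split; [exact: Lfun_cst|rewrite big_ord0 /Ex expectation_cst].
have [h1 h2] := IH (fun i => G (widen_ord (leqnSn n) i)) (fun i => hG _).
have e : (fun t => \sum_(i < n.+1) G i t) =
   (fun t => 1 * (\sum_(i < n) G (widen_ord (leqnSn n) i) t) + 1 * G ord_max t).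
  by apply/funext => t; rewrite big_ord_recr !mul1r.
rewrite e; split; first exact: L1_lin.
by rewrite ExL// h2 big_ord_recr !mul1r.
Qed.

Lemma indic_comp {dV} {TV : measurableType dV} (V : T -> TV) (A : set TV) t :
  \1_A (V t) = \1_(V @^-1` A) t :> R.
Proof. by rewrite !indicE. Qed.

Lemma step {dV} {TV : measurableType dV} (U : T -> R) (V : T -> TV) (f : TV -> R)
  (s : {sfun TV >-> R}) :
  measurable_fun setT V -> is_condexp P U V f ->
  Ex P (fun t => U t * s (V t)) = Ex P (fun t => f (V t) * s (V t)).
Proof.
move=> mV [iU mf ifV hc].
pose S := finmap.enum_fset (fset_set (range s)).
have mA i : measurable (V @^-1` (s @^-1` [set S`_i])).
  by rewrite -[X in measurable X]setTI; apply: mV => //; exact: measurable_sfunP.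
have gen (F : T -> R) : F \in Lfun P 1 ->
  Ex P (fun t => F t * s (V t)) =
  \sum_(i < size S) S`_i * Ex P (F \* \1_(V @^-1` (s @^-1` [set S`_i]))).
  move=> hF.
  have Li i : (fun t => S`_i * (F \* \1_(V @^-1` (s @^-1` [set S`_i]))) t) \in Lfun P 1.
    apply: (@L1_dom _ _ _ P (fun t => `|S`_i| * `|F t|)).
    - rewrite (_ : (fun t => `|S`_i| * `|F t|) = `|S`_i| \o* (Num.norm \o F)).
        by apply: Lfun_scale => //; exact: Lfun_norm.
      by apply/funext => t /=; rewrite mulrC.
    - apply: measurable_funM => //; apply: measurable_funM.
        exact: L1_mfun hF.
      by apply/measurable_indicP; exact: mA.
    - move=> t /=; rewrite !normrM ler_wpM2l// ler_piMr// indicE.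
      by case: (t \in _); rewrite ?normr1 ?normr0.
  have [_ e] := @Ex_sum (size S)
    (fun i t => S`_i * (F \* \1_(V @^-1` (s @^-1` [set S`_i]))) t) (fun i => Li i).
  have LI i : (F \* \1_(V @^-1` (s @^-1` [set S`_i]))) \in Lfun P 1.
    apply: (@L1_mulB _ _ _ P _ _ 1) => //.
    by move=> t; rewrite indicE; case: (t \in _); rewrite ?normr1 ?normr0.
  under eq_bigr => i _ do rewrite -ExZ//.
  rewrite -e.
  apply: eq_Ex => t; rewrite (fimfunEord s (V t)) -/S mulr_sumr.
  apply: eq_bigr => i _ /=; rewrite indic_comp; ring.
have LU : U \in Lfun P 1 by apply/Lfun1_integrable.
have LfV : (f \o V) \in Lfun P 1 by apply/Lfun1_integrable.
rewrite (gen _ LU) (gen _ LfV); apply: eq_bigr => i _; congr (_ * _).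
by rewrite /Ex hc//; apply: measurable_sfunP.
Qed.

Lemma dct_side {dV} {TV : measurableType dV} (V : T -> TV) (W : T -> R)
  (k : TV -> R) (a : nat -> TV -> R) (D : T -> R) :
  measurable_fun setT V -> measurable_fun setT W -> measurable_fun setT k ->
  (forall n, measurable_fun setT (a n)) ->
  (forall v, a ^~ v @ \oo --> k v) ->
  (forall n v, `|a n v| <= `|k v|) ->
  D \in Lfun P 1 -> (forall t, `|W t| * `|k (V t)| <= D t) ->
  Ex P (fun t => W t * a n (V t)) @[n --> \oo] --> Ex P (fun t => W t * k (V t)).
Proof.
move=> mV mW mk ma acv ak LD dom.
have LW : (fun t => W t * k (V t)) \in Lfun P 1.
  apply: (@L1_dom _ _ _ P _ _ LD).
    by apply: measurable_funM => //; exact: measurableT_comp.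
  by move=> t; rewrite normrM.
have iD : P.-integrable setT (EFin \o D) by apply/Lfun1_integrable.
have := @dominated_convergence _ _ _ P setT measurableT
  (fun n t => (W t * a n (V t))%:E) (fun t => (W t * k (V t))%:E) (EFin \o D).
case.
- move=> n; apply/measurable_EFinP; apply: measurable_funM => //.
  exact: measurableT_comp.
- apply/measurable_EFinP; apply: measurable_funM => //.
  exact: measurableT_comp.
- apply: aeW => t _; apply/fine_cvgP; split; first exact: nearW.
  exact: (@cvgMl_tmp _ _ _ _ _ (W t) _ (acv (V t))).
- exact: iD.
- apply: aeW => t n _ /=; rewrite lee_fin normrM (le_trans _ (dom t))//.
  by rewrite ler_wpM2l.
move=> _ _ h.
have e : (\int[P]_x (W x * k (V x))%:E)%E = (Ex P (fun t => W t * k (V t)))%:E.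
  by rewrite -ExE// unlock.
rewrite e in h.
have -> : (fun n => Ex P (fun t => W t * a n (V t))) =
  fine \o [sequence (\int[P]_(x in setT) (W x * a n (V x))%:E)%E]_n.
  by apply/funext => n; rewrite /Ex unlock.
exact: fine_cvg h.
Qed.

Lemma condexp_mU {dV} {TV : measurableType dV} (U : T -> R) (V : T -> TV) (f : TV -> R) :
  is_condexp P U V f -> measurable_fun setT U.
Proof. by case=> iU _ _ _; apply/measurable_EFinP; exact: measurable_int iU. Qed.

Lemma core_nn {dV} {TV : measurableType dV} (U : T -> R) (V : T -> TV) (f : TV -> R)
  (k : TV -> R) (D : T -> R) :
  measurable_fun setT V -> is_condexp P U V f -> measurable_fun setT k ->
  (forall v, 0 <= k v) -> D \in Lfun P 1 ->
  (forall t, `|U t| * `|k (V t)| <= D t) ->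
  (forall t, `|f (V t)| * `|k (V t)| <= D t) ->
  Ex P (fun t => U t * k (V t)) = Ex P (fun t => f (V t) * k (V t)).
Proof.
move=> mV hce mk k0 LD dU df.
have mU : measurable_fun setT U by exact: condexp_mU hce.
have [_ mf _ _] := hce.
have mk' : measurable_fun setT (EFin \o k) by apply/measurable_EFinP.
have k0' : forall x, setT x -> (0 <= (EFin \o k) x)%E by move=> x _; rewrite lee_fin.
pose a n := approx setT (EFin \o k) n.
have ma n : measurable_fun setT (a n).
  rewrite /a -(nnsfun_approxE measurableT mk'). exact: measurable_funP.
have acv v : a ^~ v @ \oo --> k v.
  exact: (cvg_approx k0' (I : setT v) (ltry _)).
have ak n v : `|a n v| <= `|k v|.
  have h0 : 0 <= a n v by rewrite /a -(nnsfun_approxE measurableT mk').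
  have := le_approx n k0' (I : setT v); rewrite lee_fin => h.
  by rewrite ger0_norm// ger0_norm.
have stepn n : Ex P (fun t => U t * a n (V t)) = Ex P (fun t => f (V t) * a n (V t)).
  by rewrite /a -(nnsfun_approxE measurableT mk' n); exact: step.
have h1 := @dct_side _ _ V U k a D mV mU mk ma acv ak LD dU.
have h2 := @dct_side _ _ V (f \o V) k a D mV (measurableT_comp mf mV) mk ma acv ak LD df.
rewrite (funext stepn) in h1.
exact: (cvg_unique _ h1 h2).
Qed.

Lemma core {dV} {TV : measurableType dV} (U : T -> R) (V : T -> TV) (f : TV -> R)
  (k : TV -> R) (D : T -> R) :
  measurable_fun setT V -> is_condexp P U V f -> measurable_fun setT k ->
  D \in Lfun P 1 ->
  (forall t, `|U t| * `|k (V t)| <= D t) ->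
  (forall t, `|f (V t)| * `|k (V t)| <= D t) ->
  Ex P (fun t => U t * k (V t)) = Ex P (fun t => f (V t) * k (V t)).
Proof.
move=> mV hce mk LD dU df.
have mU : measurable_fun setT U by exact: condexp_mU hce.
have [_ mf _ _] := hce.
pose kp v := (`|k v| + k v) / 2; pose kn v := (`|k v| - k v) / 2.
have hb (x : R) : 0 <= (`|x| + x) / 2 /\ 0 <= (`|x| - x) / 2 /\
    (`|x| + x) / 2 <= `|x| /\ (`|x| - x) / 2 <= `|x|.
  by have [h|h] := leP 0 x; [rewrite ger0_norm | rewrite ltr0_norm]; lra.
have hk (x : R) : x = (`|x| + x) / 2 - (`|x| - x) / 2 by lra.
have kp0 v : 0 <= kp v by have [? [? [? ?]]] := hb (k v).
have kn0 v : 0 <= kn v by have [? [? [? ?]]] := hb (k v).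
have kpb v : `|kp v| <= `|k v|.
  by rewrite ger0_norm//; have [? [? [? ?]]] := hb (k v).
have knb v : `|kn v| <= `|k v|.
  by rewrite ger0_norm//; have [? [? [? ?]]] := hb (k v).
have mkp : measurable_fun setT kp.
  apply: measurable_funM => //; apply: measurable_funD => //.
  exact: measurableT_comp.
have mkn : measurable_fun setT kn.
  apply: measurable_funM => //; apply: measurable_funB => //.
  exact: measurableT_comp.
have gen (W : T -> R) (kk : TV -> R) : measurable_fun setT W -> measurable_fun setT kk ->
    (forall v, `|kk v| <= `|k v|) -> (forall t, `|W t| * `|k (V t)| <= D t) ->
    (fun t => W t * kk (V t)) \in Lfun P 1.
  move=> mW mkk hkk dW; apply: (@L1_dom _ _ _ P _ _ LD).
    by apply: measurable_funM => //; exact: measurableT_comp.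
  move=> t; rewrite normrM (le_trans _ (dW t))// ler_wpM2l//.
have e (W : T -> R) : measurable_fun setT W -> (forall t, `|W t| * `|k (V t)| <= D t) ->
    Ex P (fun t => W t * k (V t)) =
    Ex P (fun t => W t * kp (V t)) - Ex P (fun t => W t * kn (V t)).
  move=> mW dW.
  rewrite (@eq_Ex _ _ _ P _ (fun t => 1 * (W t * kp (V t)) + (-1) * (W t * kn (V t)))).
    by rewrite ExL ?gen// mul1r mulN1r.
  by move=> t; rewrite /kp /kn mul1r mulN1r -mulrBr -(hk (k (V t))).
have mfV : measurable_fun setT (f \o V) by exact: measurableT_comp.
rewrite e// (e (f \o V))//.
have dUp t : `|U t| * `|kp (V t)| <= D t by rewrite (le_trans _ (dU t))// ler_wpM2l.
have dUn t : `|U t| * `|kn (V t)| <= D t by rewrite (le_trans _ (dU t))// ler_wpM2l.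
have dfp t : `|f (V t)| * `|kp (V t)| <= D t by rewrite (le_trans _ (df t))// ler_wpM2l.
have dfn t : `|f (V t)| * `|kn (V t)| <= D t by rewrite (le_trans _ (df t))// ler_wpM2l.
by rewrite (@core_nn _ _ U V f kp D mV hce mkp kp0 LD dUp dfp) (@core_nn _ _ U V f kn D mV hce mkn kn0 LD dUn dfn).
Qed.

End core.

Arguments core {d T R P dV TV U V f k D}.

End CoreM.
Import CoreM.

Import numFieldNormedType.Exports.

Theorem proposition3 (d : measure_display) (T : measurableType d) (R : realType)
    (P : probability T R) (dZ : measure_display) (TZ : measurableType dZ)
    (Z : T -> TZ) (X2 Y eps : T -> R) (g : R * R -> R) (pi : TZ -> R) :
  let X : T -> R * R := fun t => (1, X2 t) in
  let pibar : R := fine (P (X2 @^-1` [set 1])) in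
  let varpi : R := fine ('V_P[pi \o Z]) in
  let gamma : R := pibar * (1 - pibar) / varpi in
  let alpha : R := pibar * (1 - gamma) in
  let alphaIV : R := fine (covariance P Y (pi \o Z)) / fine (covariance P X2 (pi \o Z)) in
  let cIV : R := fine ('E_P[Y]) - alphaIV * pibar in
  measurable_fun setT Z ->
  measurable_fun setT X2 ->
  (forall t, X2 t = 0 \/ X2 t = 1) ->
  measurable_fun setT g -> (g \o X) \in Lfun P 2 ->
  measurable_fun setT Y ->
  (forall t, Y t = g (X t) + eps t) ->
  is_condexp P eps Z (cst 0) ->
  Y \in Lfun P 2 ->
  is_condexp P X2 Z pi ->
  0 < pibar < 1 ->
  0 < varpi ->
  (exists h : TZ -> R * R, iv_solution P Z X h) /\
  (exists h0 : TZ -> R * R, min_norm_iv_solution P Z X h0) /\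
  (forall h0 : TZ -> R * R, min_norm_iv_solution P Z X h0 ->
     {ae P, forall t, (h0 (Z t)).2 = alpha + gamma * pi (Z t)}) /\
  (oliva P X g = \col_(i < 2) (if i == ord0 then cIV else alphaIV)).
Proof.
move=> X pibar varpi gamma alpha alphaIV cIV mZ mX2 X2b mg gL2 mY hY hce hYL2 hcpi hpi hvar.
have [iX2 mpi ipZ hcp] := hcpi.
pose pc z := Num.min (Num.max (pi z) 0) 1.
have pcb z : 0 <= pc z <= 1.
  apply/andP; split; last by rewrite ge_min lexx orbT.
  by rewrite le_min ler01 andbT le_max lexx orbT.
have pce z : 0 <= pi z <= 1 -> pc z = pi z.
  by case/andP => h0 h1; rewrite /pc (elimT max_idPl h0) (elimT min_idPl h1).
have mpc : measurable_fun setT pc.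
  by apply: measurable_minr => //; apply: measurable_maxr.
pose q t := pc (Z t).
have mq : measurable_fun setT q by exact: measurableT_comp mpc mZ.
have qb t : `|q t| <= 1.
  by have /andP[h0 h1] := pcb (Z t); rewrite ger0_norm.
have Lq : q \in Lfun P 1 by exact: (L1_bdd mq qb).
have X2b' t : `|X2 t| <= 1 by case: (X2b t) => ->; rewrite ?normr0 ?normr1.
have LX2 : X2 \in Lfun P 1 by exact: (L1_bdd mX2 X2b').
have mp : measurable_fun setT (pi \o Z) by exact: measurableT_comp mpi mZ.
have LpZ : (pi \o Z) \in Lfun P 1 by apply/Lfun1_integrable.
have mind (A : set TZ) : measurable A -> measurable (Z @^-1` A).
  by move=> mA; rewrite -[X in measurable X]setTI; apply: mZ.
have indb (A : set T) t : `|\1_A t| <= 1 :> R.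
  by rewrite indicE; case: (t \in A); rewrite ?normr1 ?normr0.
(* pi(Z) in [0,1] a.s. *)
have side (A : set R) (sg : R) : measurable A ->
    (forall x, A x -> forall y, y = 0 \/ y = 1 -> 0 < sg * (x - y)) ->
    {ae P, forall t, ~ A (pi (Z t))}.
  move=> mA hA.
  have mB : measurable (pi @^-1` A).
    by rewrite -[X in measurable X]setTI; apply: mpi.
  pose Ind := \1_(Z @^-1` (pi @^-1` A)) : T -> R.
  have mI : measurable_fun setT Ind by apply/measurable_indicP; exact: mind.
  pose G t := sg * (pi (Z t) * Ind t) + (- sg) * (X2 t * Ind t).
  have L1 : (fun t => pi (Z t) * Ind t) \in Lfun P 1.
    exact: (L1_mulB LpZ mI (indb _)).
  have L2 : (fun t => X2 t * Ind t) \in Lfun P 1.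
    exact: (L1_mulB LX2 mI (indb _)).
  have G0 t : 0 <= G t.
    rewrite /G /Ind indicE; have [h|h] := boolP (t \in Z @^-1` (pi @^-1` A)).
      rewrite /= !mulr1; have := hA _ (set_mem h) _ (X2b t); lra.
    by rewrite /= !mulr0 addr0.
  have EG : Ex P G = 0.
    rewrite /G ExL//.
    have -> : Ex P (fun t => X2 t * Ind t) = Ex P (fun t => pi (Z t) * Ind t).
      by rewrite /Ex (hcp _ mB).
    ring.
  have LG : G \in Lfun P 1 by exact: L1_lin.
  have mG : measurable_fun setT G by exact: L1_mfun LG.
  have := ae0 mG G0 EG LG.
  apply: filterS => t Gt hAt.
  have := hA _ hAt _ (X2b t).
  have ht : t \in Z @^-1` (pi @^-1` A) by apply: mem_set.
  move: Gt; rewrite /G /Ind indicE ht !mulr1; lra.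
have aeq : {ae P, forall t, pi (Z t) = q t}.
  have h1 := @side `]1, +oo[%classic 1 (measurable_itv _).
  have h0 := @side `]-oo, 0[%classic (-1) (measurable_itv _).
  have {h1}h1 : {ae P, forall t, ~ `]1, +oo[%classic (pi (Z t))}.
    by apply: h1 => x; rewrite /= in_itv /= andbT => hx y [->|->]; lra.
  have {h0}h0 : {ae P, forall t, ~ `]-oo, 0[%classic (pi (Z t))}.
    by apply: h0 => x; rewrite /= in_itv /= => hx y [->|->]; lra.
  apply: filterS2 h1 h0 => t a b; rewrite /q pce //; apply/andP; split.
    by rewrite leNgt; apply/negP => h; apply: b; rewrite /= in_itv /= h.
  by rewrite leNgt; apply/negP => h; apply: a; rewrite /= in_itv /= h.
have iq : P.-integrable setT (EFin \o q) by apply/Lfun1_integrable.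
have hcq : is_condexp P X2 Z pc.
  split => // A mA; rewrite (hcp A mA); apply: expect_ae.
  - apply: measurable_funM => //; apply/measurable_indicP; exact: mind.
  - apply: measurable_funM => //; apply/measurable_indicP; exact: mind.
  - by apply: filterS aeq => t /= ->.
have KEY (k : TZ -> R) : measurable_fun setT k -> (k \o Z) \in Lfun P 1 ->
    Ex P (fun t => X2 t * k (Z t)) = Ex P (fun t => q t * k (Z t)).
  move=> mk Lk.
  apply: (core (D := fun t => `|k (Z t)|) mZ hcq mk).
  - exact: Lfun_norm.
  - by move=> t; rewrite ler_piMl// X2b'.
  - by move=> t; rewrite ler_piMl// (qb t).
have [ieps _ _ hceps] := hce.
have Leps : eps \in Lfun P 1 by apply/Lfun1_integrable.
have KEYe (k : TZ -> R) (B : R) : measurable_fun setT k -> (forall z, `|k z| <= B) ->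
    Ex P (fun t => eps t * k (Z t)) = 0.
  move=> mk kB.
  rewrite (core (D := fun t => `|eps t| * `|B|) mZ hce mk).
  - by rewrite (@eq_Ex _ _ _ P _ (fun=> 0)) ?Ex_cst// => t; rewrite /= mul0r.
  - exact: (Lfun_scale _ _ (Lfun_norm Leps)).
  - by move=> t; rewrite ler_wpM2l// (le_trans (kB _)) ?ler_norm.
  - by move=> t /=; rewrite normr0 mul0r mulr_ge0.
have mone : measurable_fun setT (fun _ : TZ => (1 : R)) by [].
have Lone : ((fun _ : TZ => (1 : R)) \o Z) \in Lfun P 1 by exact: L1_cst.
have Eeps : Ex P eps = 0.
  rewrite -(KEYe _ 1 mone) => [|z]; last by rewrite normr1.
  by apply: eq_Ex => t; rewrite mulr1.
have pcb' z : `|pc z| <= 1 by have /andP[h0 h1] := pcb z; rewrite ger0_norm.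
have Eepsq : Ex P (fun t => eps t * q t) = 0 by exact: (KEYe _ 1 mpc pcb').
have EX2 : Ex P X2 = pibar.
  have mS : measurable (X2 @^-1` [set 1]).
    by rewrite -[X in measurable X]setTI; apply: mX2.
  rewrite /pibar -(expectation_indic P mS) /Ex; congr fine; congr expectation.
  apply/funext => t; rewrite indicE; case: (X2b t) => e; rewrite e.
    by rewrite memNset //= => h; lra.
  by rewrite mem_set.
have Eq : Ex P q = pibar.
  rewrite -EX2 (@eq_Ex _ _ _ P X2 (fun t => X2 t * 1)) => [|t]; last by rewrite mulr1.
  rewrite (KEY _ mone Lone).
  by apply: eq_Ex => t; rewrite mulr1.
pose s2 := Ex P (fun t => q t * q t).
have EX2q : Ex P (fun t => X2 t * q t) = s2.
  by rewrite (KEY pc mpc) //; exact: Lq.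
have EX2X2 : Ex P (fun t => X2 t * X2 t) = pibar.
  by rewrite -EX2; apply: eq_Ex => t; case: (X2b t) => ->; rewrite ?mulr0 ?mulr1.
have Lqq : (fun t => q t * q t) \in Lfun P 1 by exact: (L1_mulB Lq mq qb).
have LX2q : (fun t => X2 t * q t) \in Lfun P 1 by exact: (L1_mulB LX2 mq qb).
have LX2X2 : (fun t => X2 t * X2 t) \in Lfun P 1 by exact: (L1_mulB LX2 mX2 X2b').
have hvarpi : varpi = s2 - pibar * pibar.
  rewrite /varpi /variance (cov_ae mp mp mq mq aeq aeq) covarianceE //.
  rewrite (ExE Lq) Eq.
  have -> : ('E_P[q * q] = s2%:E)%E by rewrite (ExE Lqq).
  by [].
pose g0 := g (1, 0); pose b := g (1, 1) - g (1, 0).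
have hG t : g (X t) = g0 + b * X2 t.
  by rewrite /X /g0 /b; case: (X2b t) => ->; ring.
have LG : (g \o X) \in Lfun P 1 by exact: L2_L1 gL2.
have LY : Y \in Lfun P 1 by exact: L2_L1 hYL2.
have Lone' : (fun _ : T => (1 : R)) \in Lfun P 1 by exact: L1_cst.
have EY : Ex P Y = g0 + b * pibar.
  rewrite (@eq_Ex _ _ _ P _ (fun t => g0 * 1 + b * X2 t + 1 * eps t)).
    by rewrite ExL3 // Ex_cst EX2 Eeps; ring.
  by move=> t; rewrite hY hG; ring.
have LYq : (fun t => Y t * q t) \in Lfun P 1 by exact: (L1_mulB LY mq qb).
have Lepsq : (fun t => eps t * q t) \in Lfun P 1 by exact: (L1_mulB Leps mq qb).
have EYq : Ex P (fun t => Y t * q t) = g0 * pibar + b * s2.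
  rewrite (@eq_Ex _ _ _ P _ (fun t => g0 * q t + b * (X2 t * q t) + 1 * (eps t * q t))).
    by rewrite ExL3 // Eq EX2q Eepsq; ring.
  by move=> t; rewrite hY hG; ring.
have covY : fine (covariance P Y (pi \o Z)) = b * varpi.
  rewrite (@cov_ae _ _ _ P Y (pi \o Z) Y q mY mp mY mq (aeW _ _) aeq) //.
  rewrite covarianceE //.
  have -> : ('E_P[Y * q] = (g0 * pibar + b * s2)%:E)%E by rewrite (ExE LYq) EYq.
  rewrite (ExE LY) (ExE Lq) EY Eq hvarpi /=; ring.
have covX : fine (covariance P X2 (pi \o Z)) = varpi.
  rewrite (@cov_ae _ _ _ P X2 (pi \o Z) X2 q mX2 mp mX2 mq (aeW _ _) aeq) //.
  rewrite covarianceE //.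
  have -> : ('E_P[X2 * q] = s2%:E)%E by rewrite (ExE LX2q) EX2q.
  rewrite (ExE LX2) (ExE Lq) EX2 Eq hvarpi /=; ring.
have hvar0 : varpi != 0 by rewrite gt_eqF.
have aIV : alphaIV = b by rewrite /alphaIV covY covX mulfK.
have cIVE : cIV = g0.
  rewrite /cIV aIV -/(Ex P Y) EY; ring.
have ord2 (i : 'I_2) : i = ord0 \/ i = ord_max.
  by case: i => [[|[|]]] //= hi; [left|right]; apply: val_inj.
have part4 : oliva P X g = \col_(i < 2) (if i == ord0 then cIV else alphaIV).
  pose M0 := \matrix_(i < 2, j < 2) (if (i == ord0) && (j == ord0) then 1 else pibar) : 'M[R]_2.
  pose v0 := \col_(i < 2) (if i == ord0 then g0 + b * pibar else g0 * pibar + b * pibar) : 'cV[R]_2.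
  pose beta := \col_(i < 2) (if i == ord0 then g0 else b) : 'cV[R]_2.
  pose N0 := \matrix_(i < 2, j < 2) ((if (i == ord0) && (j == ord0) then pibar
      else if (i != ord0) && (j != ord0) then 1 else - pibar) / (pibar * (1 - pibar))) : 'M[R]_2.
  have eM : \matrix_(i < 2, j < 2) fine ('E_P[Xcomp X i \* Xcomp X j])%E = M0.
    apply/matrixP => i j; rewrite !mxE.
    case: (ord2 i) => ->; case: (ord2 j) => -> /=.
    - rewrite -[fine _]/(Ex P _) (@eq_Ex _ _ _ P _ (fun _ => 1)) ?Ex_cst// => t.
      by rewrite /Xcomp /= mulr1.
    - rewrite -[fine _]/(Ex P _) -EX2; apply: eq_Ex => t.
      by rewrite /Xcomp /= mul1r.
    - rewrite -[fine _]/(Ex P _) -EX2; apply: eq_Ex => t.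
      by rewrite /Xcomp /= mulr1.
    - rewrite -[fine _]/(Ex P _) -EX2X2; apply: eq_Ex => t.
      by rewrite /Xcomp /=.
  have ev : \col_(i < 2) fine ('E_P[Xcomp X i \* (g \o X)])%E = v0.
    apply/matrixP => i j; rewrite !mxE.
    case: (ord2 i) => -> /=.
    - rewrite -[fine _]/(Ex P _) (@eq_Ex _ _ _ P _ (fun t => g0 * 1 + b * X2 t)).
        by rewrite ExL // Ex_cst EX2 mulr1.
      by move=> t; rewrite /Xcomp /= hG mul1r mulr1.
    - rewrite -[fine _]/(Ex P _) (@eq_Ex _ _ _ P _ (fun t => g0 * X2 t + b * (X2 t * X2 t))).
        by rewrite ExL // EX2 EX2X2.
      by move=> t; rewrite /Xcomp /= hG; ring.
  have hp0 : pibar * (1 - pibar) != 0.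
    by case/andP: hpi => h0 h1; rewrite mulf_neq0 ?gt_eqF ?subr_gt0.
  have MN : M0 *m N0 = 1%:M.
    apply/matrixP => i j; rewrite !mxE !big_ord_recr big_ord0 /= !mxE.
    have hp1 : pibar != 0 by case/andP: hpi => h0 h1; rewrite gt_eqF.
    have hp2 : 1 - pibar != 0 by case/andP: hpi => h0 h1; rewrite gt_eqF ?subr_gt0.
    case: (ord2 i) => ->; case: (ord2 j) => -> /=; field; by rewrite ?hp1 ?hp2 ?hp0.
  have Mb : M0 *m beta = v0.
    apply/matrixP => i j; rewrite !mxE !big_ord_recr big_ord0 /= !mxE.
    case: (ord2 i) => -> /=; ring.
  have [uM _] := mulmx1_unit MN.
  rewrite /oliva eM ev -Mb mulKmx //.
  apply/matrixP => i j; rewrite !mxE cIVE aIV //.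
have hvar0' : s2 - pibar * pibar != 0 by rewrite -hvarpi.
have id1 : alpha + gamma * pibar = pibar by rewrite /alpha; ring.
have id2 : alpha * pibar + gamma * s2 = pibar.
  rewrite /alpha /gamma hvarpi; field; exact: hvar0'.
pose w t := alpha + gamma * q t.
have mw : measurable_fun setT w.
  by apply: measurable_funD => //; apply: measurable_funM.
have wb t : `|w t| <= `|alpha| + `|gamma|.
  rewrite (le_trans (ler_normD _ _))// lerD2l normrM ler_piMr//.
have Lw : w \in Lfun P 1 by exact: (L1_bdd mw wb).
have Lww : (fun t => w t ^+ 2) \in Lfun P 1.
  rewrite (_ : (fun t => _) = (fun t => w t * w t)); last by apply/funext => t; rewrite expr2.
  exact: (L1_mulB Lw mw wb).
have Ew : Ex P w = pibar.
  rewrite (@eq_Ex _ _ _ P _ (fun t => alpha * 1 + gamma * q t)).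
    by rewrite ExL // Ex_cst Eq mulr1.
  by move=> t; rewrite mulr1.
have Eww : Ex P (fun t => w t ^+ 2) = alpha * pibar + gamma * pibar.
  rewrite (@eq_Ex _ _ _ P _ (fun t => (alpha ^+ 2) * 1 + (2 * alpha * gamma) * q t + (gamma ^+ 2) * (q t * q t))).
    rewrite ExL3 // Ex_cst Eq -/s2.
    transitivity (alpha * (alpha + gamma * pibar) + gamma * (alpha * pibar + gamma * s2)); first by ring.
    by rewrite id1 id2.
  by move=> t; rewrite /w; ring.
pose hs := fun z : TZ => ((1 : R), alpha + gamma * pc z).
have mhs2 : measurable_fun setT (fun z => (hs z).2).
  by apply: measurable_funD => //; apply: measurable_funM.
have ind_setT t : \1_(X @^-1` setT) t = 1 :> R by rewrite indicE mem_set.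
have LXind (A : set (R * R)) : measurable A ->
    measurable_fun setT (\1_(X @^-1` A) : T -> R).
  move=> mA; apply/measurable_indicP; rewrite -[X in measurable X]setTI.
  have mX : measurable_fun setT X.
    by apply: (@measurable_fun_pair _ _ _ _ _ _ (fun _ => (1 : R)) X2).
  exact: mX.
have iv_hs : iv_solution P Z X hs.
  split.
  - split => //; apply: (@L2_bdd _ _ _ P _ 1); [rewrite /comp /hs /=; exact: measurable_cst | by move=> t /=; rewrite normr1].
  - split => //; apply: (@L2_bdd _ _ _ P _ (`|alpha| + `|gamma|)).
      exact: (measurableT_comp mhs2 mZ).
    by move=> t; exact: (wb t).
  - split => //.
    + by apply/Lfun1_integrable; exact: L1_cst.
    + exact: measurable_fst.
    + by apply/Lfun1_integrable; exact: L1_cst.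
  - split.
    + by apply/Lfun1_integrable; exact: Lw.
    + exact: measurable_snd.
    + exact: iX2.
    move=> A mA.
    pose a0 : R := \1_A ((1 : R), (0 : R)).
    pose a1 : R := \1_A ((1 : R), (1 : R)) - a0.
    have hind t : \1_(X @^-1` A) t = a0 + a1 * X2 t.
      rewrite -(indic_comp X A t) /a1 /a0 /X; case: (X2b t) => ->; ring.
    have mI := LXind A mA.
    rewrite (ExE (L1_mulB Lw mI (indb _))) (ExE (L1_mulB LX2 mI (indb _))).
    congr EFin.
    rewrite (@eq_Ex _ _ _ P _ (fun t => 1 * (alpha * a0 * 1 + alpha * a1 * X2 t + gamma * a0 * q t) + (gamma * a1) * (X2 t * q t))); last first.
      by move=> t; rewrite /= hind /w; ring.
    rewrite ExL ?L1_lin3 // ExL3 // Ex_cst EX2 Eq EX2q.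
    rewrite (@eq_Ex _ _ _ P _ (fun t => a0 * X2 t + a1 * (X2 t * X2 t))); last first.
      by move=> t; rewrite /= hind; ring.
    rewrite ExL // EX2 EX2X2.
    transitivity (a0 * (alpha + gamma * pibar) + a1 * (alpha * pibar + gamma * s2)); first by ring.
    by rewrite id1 id2.
have mA1 : measurable [set x : R * R | x.2 = 1].
  have := @measurable_snd _ _ R R measurableT [set (1 : R)] (measurable_set1 (1 : R)).

  by rewrite setTI.
have dec h : iv_solution P Z X h ->
    [/\ L2_sqnorm P Z (fun z => (h z).2) = (Ex P (fun t => (h (Z t)).2 ^+ 2))%:E,
        (fun t => ((h (Z t)).2 - w t) ^+ 2) \in Lfun P 1,
        measurable_fun setT (fun t => ((h (Z t)).2 - w t) ^+ 2) &
        Ex P (fun t => ((h (Z t)).2 - w t) ^+ 2) =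
        Ex P (fun t => (h (Z t)).2 ^+ 2) - Ex P (fun t => w t ^+ 2)].
  case=> _ [mk Lk2] _ ce2.
  pose kZ t := (h (Z t)).2.
  have mkZ : measurable_fun setT kZ by exact: measurableT_comp mk mZ.
  have LkZ : kZ \in Lfun P 1 by exact: L2_L1 Lk2.
  have LkZ2 : (fun t => kZ t ^+ 2) \in Lfun P 1.
    by apply/Lfun1_integrable; exact: Lfun2_integrable_sqr Lk2.
  have [_ _ _ hc] := ce2.
  have ceA (A : set (R * R)) : measurable A ->
      Ex P (fun t => kZ t * \1_(X @^-1` A) t) = Ex P (fun t => X2 t * \1_(X @^-1` A) t).
    by move=> mA; rewrite /Ex (hc A mA).
  have EkZ : Ex P kZ = pibar.
    have := ceA setT measurableT.
    under eq_Ex do rewrite ind_setT mulr1.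
    by under [in X in _ = X -> _]eq_Ex do rewrite ind_setT mulr1; rewrite EX2.
  have EkX2 : Ex P (fun t => kZ t * X2 t) = pibar.
    have := ceA _ mA1.
    have hI t : \1_(X @^-1` [set x : R * R | x.2 = 1]) t = X2 t :> R.
      case: (X2b t) => e.
        by rewrite indicE memNset /= ?e //= => hh; lra.
      have ht : t \in X @^-1` [set x : R * R | x.2 = 1] by apply: mem_set => /=; exact e.
      by rewrite indicE ht e.
    under eq_Ex do rewrite hI.
    by under [in X in _ = X -> _]eq_Ex do rewrite hI; rewrite EX2X2.
  have Ekq : Ex P (fun t => kZ t * q t) = pibar.
    rewrite -EkX2 (@eq_Ex _ _ _ P _ (fun t => q t * kZ t)) => [|t]; last by rewrite mulrC.
    rewrite -(KEY _ mk LkZ); apply: eq_Ex => t; exact: mulrC.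
  have LkZq : (fun t => kZ t * q t) \in Lfun P 1 by exact: (L1_mulB LkZ mq qb).
  have LkZw : (fun t => kZ t * w t) \in Lfun P 1 by exact: (L1_mulB LkZ mw wb).
  have Ekw : Ex P (fun t => kZ t * w t) = alpha * pibar + gamma * pibar.
    rewrite (@eq_Ex _ _ _ P _ (fun t => alpha * kZ t + gamma * (kZ t * q t))).
      by rewrite ExL // EkZ Ekq.
    by move=> t; rewrite /w; ring.
  have e2 : (fun t => (kZ t - w t) ^+ 2) =
      (fun t => 1 * kZ t ^+ 2 + (-2) * (kZ t * w t) + 1 * w t ^+ 2).
    by apply/funext => t; ring.
  split.
  - by rewrite /L2_sqnorm (ExE LkZ2).
  - by rewrite -/kZ e2; apply: L1_lin3.
  - by apply: measurable_funX; apply: measurable_funB.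
  - rewrite -/kZ e2 ExL3 // Ekw Eww; ring.
have Ls1 : L2_sqnorm P Z (fun z => (hs z).1) = 1%E.
  rewrite /L2_sqnorm (_ : (fun t => _) = cst 1); last by apply/funext => t; rewrite /= expr1n.
  by rewrite expectation_cst.
have Ls2 : L2_sqnorm P Z (fun z => (hs z).2) = (Ex P (fun t => w t ^+ 2))%:E.
  by rewrite /L2_sqnorm (ExE Lww).
have dec1 h : iv_solution P Z X h ->
    (L2_sqnorm P Z (fun z => (hs z).1) <= L2_sqnorm P Z (fun z => (h z).1))%E.
  case=> [[mk Lk2] _ ce1 _].
  pose kZ t := (h (Z t)).1.
  have LkZ : kZ \in Lfun P 1 by exact: L2_L1 Lk2.
  have LkZ2 : (fun t => kZ t ^+ 2) \in Lfun P 1.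
    by apply/Lfun1_integrable; exact: Lfun2_integrable_sqr Lk2.
  have [_ _ _ hc] := ce1.
  have EkZ : Ex P kZ = 1.
    have : Ex P (fun t => kZ t * \1_(X @^-1` setT) t) = Ex P (fun t => 1 * \1_(X @^-1` setT) t).
      by rewrite /Ex (hc setT measurableT).
    under eq_Ex do rewrite ind_setT mulr1.
    by under [in X in _ = X -> _]eq_Ex do rewrite ind_setT mulr1; rewrite Ex_cst.
  have : 0 <= Ex P (fun t => 1 * kZ t ^+ 2 + (-2) * kZ t + 1 * 1).
    by apply: Ex_ge0 => t; rewrite (_ : _ + _ = (kZ t - 1) ^+ 2) ?sqr_ge0 //; ring.
  rewrite ExL3 // Ex_cst EkZ.
  rewrite Ls1 /L2_sqnorm (ExE LkZ2) lee_fin => h0; lra.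
split; first by exists hs.
split.
  exists hs; split => // h hh; split; first exact: dec1.
  have [e1 _ _ e4] := dec h hh.
  rewrite Ls2 e1 lee_fin.
  have : 0 <= Ex P (fun t => ((h (Z t)).2 - w t) ^+ 2) by apply: Ex_ge0 => t; exact: sqr_ge0.
  rewrite e4; lra.
split; last exact: part4.
move=> h0 [hh0 hmin].
have [_ le2] := hmin hs iv_hs.
have [e1 L m e4] := dec h0 hh0.
move: le2; rewrite Ls2 e1 lee_fin => le2.
have E0 : Ex P (fun t => ((h0 (Z t)).2 - w t) ^+ 2) = 0.
  have : 0 <= Ex P (fun t => ((h0 (Z t)).2 - w t) ^+ 2) by apply: Ex_ge0 => t; exact: sqr_ge0.
  rewrite e4 in le2 *; lra.
have := ae0 m (fun t => sqr_ge0 _) E0 L.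
apply: filterS2 aeq => t e /eqP; rewrite sqrf_eq0 subr_eq0 => /eqP ->.
by rewrite /w e.
Qed.
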